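(* Let $K$ be a field of characteristic $p>0$, $s\geq1$ an integer, $n=1+p^s$, let $X$ be the $n\times n$ matrix with $1$'s in positions $(i,i+1)$, $1\leq i\leq n-1$, and $0$ elsewhere, let $B=1+X$, and let $k$ be a positive integer. Then: (1) there exists a unique matrix $A\in\mathrm{U}_n(K)$ whose last column has only zero entries except at position $(n,n)$ such that $ABA^{-1}=B^{1+p^k}$; (2) if $p=2$, there exists a unique matrix $A\in\mathrm{U}_n(K)$ whose last column has only zero entries except at position $(n,n)$ such that $ABA^{-1}=B^{-(1+2^k)}$.
   Context: $\mathrm{U}_n(K)$ is the group of upper-triangular unipotent $n\times n$ matrices over $K$. *)

(* Defs.v *)
From HB Require Import structures.
From mathcomp Require Import all_boot all_order all_algebra.
Set Implicit Arguments. Unset Strict Implicit. Unset Printing Implicit Defensive.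
Import GRing.Theory.
Local Open Scope ring_scope.

(* Indices are 0-based: 'I_n = {0,...,n-1}; paper position (i,j) is (i-1,j-1). *)

Definition shiftX (K : fieldType) (n : nat) : 'M[K]_n :=
  \matrix_(i < n, j < n) (if j == i.+1 :> nat then 1 else 0).

Definition Bmat (K : fieldType) (n : nat) : 'M[K]_n := 1%:M + shiftX K n.

Definition unitriangular (K : fieldType) (n : nat) (A : 'M[K]_n) : Prop :=
  (forall i j : 'I_n, (j < i)%N -> A i j = 0) /\ (forall i : 'I_n, A i i = 1).

Definition lastcol_trivial (K : fieldType) (n : nat) (A : 'M[K]_n.+1) : Prop :=
  forall i : 'I_n.+1, i != ord_max -> A i ord_max = 0.

(* Main.v *)
Require Import Defs.
From HB Require Import structures.
From mathcomp Require Import all_boot all_order all_algebra.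
From mathcomp Require Import zify.
Import GRing.Theory.
Local Open Scope ring_scope.
Set Implicit Arguments. Unset Strict Implicit.

Lemma one_entry (K : fieldType) n (i j : 'I_n.+1) :
  (1 : 'M[K]_n.+1) i j = (i == j)%:R.
Proof. by rewrite /GRing.one /= mxE. Qed.

Lemma trimul0 (K : fieldType) N (P Q : 'M[K]_N) a b :
  (forall i j : 'I_N, (j < i + a)%N -> P i j = 0) ->
  (forall i j : 'I_N, (j < i + b)%N -> Q i j = 0) ->
  forall i j : 'I_N, (j < i + a + b)%N -> (P *m Q) i j = 0.
Proof.
move=> hP hQ i j hij; rewrite mxE big1 // => l _.
case: (ltnP l (i + a)) => hl; first by rewrite hP // mul0r.
rewrite hQ ?mulr0 //; lia.
Qed.

Lemma trimul1 (K : fieldType) N (P Q : 'M[K]_N) a b :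
  (forall i j : 'I_N, (j < i + a)%N -> P i j = 0) ->
  (forall i j : 'I_N, (j < i + b)%N -> Q i j = 0) ->
  forall i j l : 'I_N, (l = i + a :> nat)%N -> (j = l + b :> nat)%N ->
  (P *m Q) i j = P i l * Q l j.
Proof.
move=> hP hQ i j l hl hj; rewrite mxE (bigD1 l) //= big1 ?addr0 // => l' hl'.
case: (ltnP l' (i + a)) => h; first by rewrite hP // mul0r.
have hne : (l' : nat) <> l by move=> e; move/eqP: hl'; apply; apply: val_inj.
rewrite hQ ?mulr0 //; lia.
Qed.

Lemma Ypow (K : fieldType) n (Y : 'M[K]_n.+1) :
  (forall i j : 'I_n.+1, (j < i + 1)%N -> Y i j = 0) ->
  (forall i j : 'I_n.+1, (j = i + 1 :> nat)%N -> Y i j = 1) ->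
  forall m, (forall i j : 'I_n.+1, (j < i + m)%N -> (Y ^+ m) i j = 0) /\
            (forall i j : 'I_n.+1, (j = i + m :> nat)%N -> (Y ^+ m) i j = 1).
Proof.
move=> h0 h1; elim=> [|m [IH0 IH1]].
  split=> i j h; rewrite one_entry.
    by have -> : (i == j) = false by apply/eqP=> e; subst; lia.
  by have -> : (i == j) by apply/eqP; apply: val_inj => /=; lia.
rewrite exprSr -mulmxE; split=> i j h.
  by apply: (trimul0 IH0 h0); lia.
have hl : (i + m < n.+1)%N by have := ltn_ord j; lia.
rewrite (trimul1 IH0 h0 (l := Ordinal hl)) //=; last by lia.
by rewrite IH1 // h1 ?mulr1 //=; lia.
Qed.

Definition UT (K : fieldType) n (P : 'M[K]_n.+1) (d : K) :=
  [/\ forall i j : 'I_n.+1, (j < i)%N -> P i j = 0,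
      forall i, P i i = 1 &
      forall i j : 'I_n.+1, j = i.+1 :> nat -> P i j = d].

Lemma UT_mul (K : fieldType) n (P Q : 'M[K]_n.+1) a b :
  UT P a -> UT Q b -> UT (P * Q) (a + b).
Proof.
move=> [P0 P1 P2] [Q0 Q1 Q2].
have P0' : forall i j : 'I_n.+1, (j < i + 0)%N -> P i j = 0.
  by move=> i j; rewrite addn0; apply: P0.
have Q0' : forall i j : 'I_n.+1, (j < i + 0)%N -> Q i j = 0.
  by move=> i j; rewrite addn0; apply: Q0.
rewrite -mulmxE; split.
- by move=> i j h; apply: (trimul0 P0' Q0'); lia.
- by move=> i; rewrite (trimul1 P0' Q0' (l := i)) ?addn0 // P1 Q1 mulr1.
move=> i j hj; rewrite mxE (bigD1 i) //= (bigD1 j) /=; last first.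
  by apply/eqP=> e; move: hj; rewrite e; lia.
rewrite big1 ?addr0; last first.
  move=> l /andP [hli hlj].
  have hne1 : (l : nat) <> i by move=> e; move/eqP: hli; apply; apply: val_inj.
  have hne2 : (l : nat) <> j by move=> e; move/eqP: hlj; apply; apply: val_inj.
  case: (ltnP l i) => h; first by rewrite P0 // mul0r.
  by rewrite Q0 ?mulr0 //; lia.
by rewrite P1 Q1 mul1r mulr1 P2 // Q2 // addrC.
Qed.

Lemma UT1 (K : fieldType) n : UT (1 : 'M[K]_n.+1) 0.
Proof.
split=> [i j h|i|i j h]; rewrite one_entry //.
- by have -> : (i == j) = false by apply/eqP=> e; subst; lia.
- by rewrite eqxx.
- by have -> : (i == j) = false by apply/eqP=> e; subst; lia.
Qed.

Lemma UT_pow (K : fieldType) n (P : 'M[K]_n.+1) a m :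
  UT P a -> UT (P ^+ m) (a *+ m).
Proof.
move=> hP; elim: m => [|m IH]; first by rewrite expr0 mulr0n; apply: UT1.
by rewrite exprS mulrS; apply: UT_mul.
Qed.

Lemma unitri_unit (K : fieldType) n (A : 'M[K]_n.+1) :
  unitriangular A -> A \is a GRing.unit.
Proof.
move=> [h0 h1].
have -> : (A \is a GRing.unit) = (A \in unitmx) by [].
rewrite unitmxE -det_tr det_trig; last first.
  by apply/is_trig_mxP => i j hij; rewrite mxE h0.
rewrite big1 ?unitr1 // => i _; by rewrite mxE h1.
Qed.

Lemma mulX_entry (K : fieldType) n (M : 'M[K]_n.+1) (i j : 'I_n.+1) :
  (M *m shiftX K n.+1) i j = if j == 0 :> nat then 0 else M i (inord j.-1).
Proof.
rewrite mxE; case: eqP => hj.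
  by rewrite big1 // => l _; rewrite mxE hj /= mulr0.
rewrite (bigD1 (inord j.-1)) //= big1 ?addr0; last first.
  move=> l hl; rewrite mxE; case: eqP => e; last by rewrite mulr0.
  by case/eqP: hl; apply: val_inj; rewrite /= e /= inordK.
rewrite /shiftX mxE inordK; last exact: leq_ltn_trans (leq_pred _) (ltn_ord j).
have hj0 : (0 < j)%N by rewrite lt0n; apply/eqP.
by rewrite prednK // eqxx mulr1.
Qed.

Lemma Xmul_entry (K : fieldType) n (M : 'M[K]_n.+1) (i j : 'I_n.+1) :
  (shiftX K n.+1 *m M) i j = if (i.+1 < n.+1)%N then M (inord i.+1) j else 0.
Proof.
rewrite mxE; case: ifP => hi.
  rewrite (bigD1 (inord i.+1)) //= big1 ?addr0; last first.
    move=> l hl; rewrite /shiftX mxE; case: eqP => e; last by rewrite mul0r.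
    by case/eqP: hl; apply: val_inj; rewrite /= e inordK.
  by rewrite /shiftX mxE inordK // eqxx mul1r.
rewrite big1 // => l _; rewrite /shiftX mxE; case: eqP => e; last by rewrite mul0r.
by move: hi (ltn_ord l); rewrite -e => ->.
Qed.

Lemma B_entry (K : fieldType) n (i j : 'I_n.+1) :
  Bmat K n.+1 i j = (i == j)%:R + (j == i.+1 :> nat)%:R.
Proof. by rewrite /Bmat /shiftX !mxE; case: (j == i.+1 :> nat). Qed.

Lemma UT_B (K : fieldType) n : UT (Bmat K n.+1) 1.
Proof.
split=> [i j h|i|i j h]; rewrite B_entry.
- case: eqP => [e|_]; first by move: h; rewrite e ltnn.
  case: eqP => [e|_]; first by move: h; rewrite e ltnNge leqW.
  by rewrite addr0.
- by rewrite eqxx (_ : (i == i.+1 :> nat) = false) ?addr0 //; apply/eqP/n_Sn.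
- rewrite h eqxx; case: eqP => [e|_]; last by rewrite add0r.
  by move: h; rewrite e => /n_Sn.
Qed.

Definition Cmat (K : fieldType) n : 'M[K]_n :=
  \matrix_(i < n, j < n) (if (i <= j)%N then (-1) ^+ (j - i) else 0).

Lemma UT_unitri (K : fieldType) n (P : 'M[K]_n.+1) d : UT P d -> unitriangular P.
Proof. by case. Qed.

Lemma BC (K : fieldType) n : Bmat K n.+1 * Cmat K n.+1 = 1.
Proof.
rewrite -mulmxE /Bmat mulmxDl mul1mx; apply/matrixP => i j.
rewrite mxE Xmul_entry one_entry.
case: (boolP (i.+1 < n.+1)%N) => hi; last first.
  rewrite addr0 /Cmat mxE.
  have hin : (i : nat) = n by have := ltn_ord i; move: hi; rewrite ltnS; lia.
  case: (ltngtP i j) => hij.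
  - by have := ltn_ord j; lia.
  - by rewrite (_ : (i == j) = false) //; apply/negbTE; rewrite neq_ltn hij orbT.
  - have -> : i = j by apply: val_inj.
    by rewrite subnn expr0 eqxx.
rewrite /Cmat !mxE inordK //.
case: (ltngtP i j) => hij.
- rewrite (_ : (j - i = (j - i.+1).+1)%N); last by rewrite subnS prednK // subn_gt0.
  rewrite exprS mulN1r addNr.
  by rewrite (_ : (i == j) = false) //; apply/negbTE; rewrite neq_ltn hij.
- rewrite addr0.
  by rewrite (_ : (i == j) = false) //; apply/negbTE; rewrite neq_ltn hij orbT.
- have -> : i = j by apply: val_inj.
  by rewrite subnn expr0 eqxx addr0.
Qed.

Lemma B_unit (K : fieldType) n : Bmat K n.+1 \is a GRing.unit.
Proof. exact/unitri_unit/UT_unitri/UT_B. Qed.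

Lemma Binv (K : fieldType) n : (Bmat K n.+1)^-1 = Cmat K n.+1.
Proof. by rewrite -[RHS](mulKr (B_unit K n)) BC mulr1. Qed.

Lemma UT_C (K : fieldType) n : UT (Cmat K n.+1) (-1).
Proof.
split=> [i j h|i|i j h]; rewrite /Cmat mxE.
- by rewrite leqNgt h.
- by rewrite leqnn subnn expr0.
- by rewrite h leqnSn subSnn expr1.
Qed.

Lemma conjP (K : fieldType) n (M T : 'M[K]_n.+1) : M \is a GRing.unit ->
  (M * Bmat K n.+1 * M^-1 = T) <-> (M *m shiftX K n.+1 = (T - 1) *m M).
Proof.
move=> hu; rewrite !mulmxE.
have hB : Bmat K n.+1 = 1 + shiftX K n.+1 by [].
split=> h.
  have e : M * Bmat K n.+1 = T * M by rewrite -h divrK.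
  rewrite hB mulrDr mulr1 in e.
  by rewrite mulrBl mul1r -e addrAC subrr add0r.
apply: (mulIr hu); rewrite divrK // hB mulrDr mulr1 h mulrBl mul1r.
by rewrite addrC subrK.
Qed.

Lemma one_sub_entry (K : fieldType) n (T : 'M[K]_n.+1) i j :
  (T - 1) i j = T i j - (i == j)%:R.
Proof. by rewrite !mxE. Qed.

Lemma charM (K : fieldType) n (Y M : 'M[K]_n.+1) :
  M *m shiftX K n.+1 = Y *m M ->
  (forall i, M i ord_max = (i == ord_max)%:R) ->
  forall i j, M i j = (Y ^+ (n - j)) i ord_max.
Proof.
move=> hM hlast i j.
suff : forall d (j i : 'I_n.+1), (n - j)%N = d -> M i j = (Y ^+ d) i ord_max.
  by move/(_ _ j i erefl).
elim=> [|d IH] {}j {}i hd.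
  have -> : j = ord_max by apply: val_inj; have := ltn_ord j; rewrite /=; lia.
  by rewrite hlast expr0 one_entry.
have hj : (j.+1 < n.+1)%N by have := ltn_ord j; lia.
have e : (M *m shiftX K n.+1) i (Ordinal hj) = (Y *m M) i (Ordinal hj) by rewrite hM.
rewrite mulX_entry /= inord_val in e; rewrite e.
rewrite exprS -mulmxE !mxE; apply: eq_bigr => l _; rewrite IH //=; lia.
Qed.

Lemma main_gen (K : fieldType) n (T : 'M[K]_n.+1) : UT T 1 ->
  exists! A : 'M[K]_n.+1,
    [/\ unitriangular A, lastcol_trivial A & A * Bmat K n.+1 * A^-1 = T].
Proof.
move=> [T0 T1 T2].
set Y := T - 1.
have hY0 : forall i j : 'I_n.+1, (j < i + 1)%N -> Y i j = 0.
  move=> i j h; rewrite one_sub_entry; case: (ltngtP j i) => e.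
  - by rewrite T0 // (_ : (i == j) = false) ?subr0 //; apply/negbTE; rewrite neq_ltn e orbT.
  - by lia.
  - have -> : j = i by apply: val_inj.
    by rewrite T1 eqxx subrr.
have hY1 : forall i j : 'I_n.+1, (j = i + 1 :> nat)%N -> Y i j = 1.
  move=> i j h; rewrite one_sub_entry T2; last by rewrite h addn1.
  by rewrite (_ : (i == j) = false) ?subr0 //; apply/eqP => e; subst; lia.
have hP := Ypow hY0 hY1.
set A := \matrix_(i < n.+1, j < n.+1) (Y ^+ (n - j)) i ord_max.
have Alast : forall i, A i ord_max = (i == ord_max)%:R.
  by move=> i; rewrite /A mxE subnn expr0 one_entry.
have AX : A *m shiftX K n.+1 = Y *m A.
  apply/matrixP => i j; rewrite mulX_entry.
  have -> : (Y *m A) i j = (Y ^+ (n - j).+1) i ord_max.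
    by rewrite exprS -mulmxE !mxE; apply: eq_bigr => l _; rewrite /A mxE.
  case: eqP => hj.
    by rewrite (proj1 (hP _)) //= hj subn0; lia.
  rewrite /A mxE inordK; last exact: leq_ltn_trans (leq_pred _) (ltn_ord j).
  congr ((Y ^+ _) i ord_max); have := ltn_ord j; lia.
have Aunit : unitriangular A.
  split=> [i j h|i]; rewrite /A mxE.
    by rewrite (proj1 (hP _)) //=; have := ltn_ord j; lia.
  by rewrite (proj2 (hP _)) //=; have := ltn_ord i; lia.
exists A; split.
  split=> //; last by apply/conjP => //; apply: unitri_unit.
  by move=> i hi; rewrite Alast (negbTE hi).
move=> A' [hu hl hc].
have hc' := (proj1 (conjP _ (unitri_unit hu))) hc.
have hl' : forall i, A' i ord_max = (i == ord_max)%:R.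
  move=> i; case: (boolP (i == ord_max)) => e; last by rewrite hl.
  by rewrite (eqP e) (proj2 hu).
apply/matrixP => i j; by rewrite (charM hc' hl') (charM AX Alast).
Qed.

Unset Implicit Arguments.

Theorem lemma3p4 (K : fieldType) (p s k : nat)
  (hp : p \in [pchar K]) (hs : (1 <= s)%N) (hk : (0 < k)%N) :
  (exists! A : 'M[K]_((p ^ s).+1),
     [/\ unitriangular A, lastcol_trivial A &
         A * Bmat K (p ^ s).+1 * A^-1 = Bmat K (p ^ s).+1 ^+ (1 + p ^ k)]) /\
  (p = 2%N ->
   exists! A : 'M[K]_((p ^ s).+1),
     [/\ unitriangular A, lastcol_trivial A &
         A * Bmat K (p ^ s).+1 * A^-1 = Bmat K (p ^ s).+1 ^- (1 + 2 ^ k)]).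
Proof.
have hm : ((1 + p ^ k)%:R : K) = 1.
  by rewrite natrD natrX (pcharf0 hp) expr0n eqn0Ngt hk addr0.
split.
  apply: main_gen.
  have := UT_pow (1 + p ^ k) (UT_B K (p ^ s)).
  by rewrite -mulr_natr mul1r hm.
move=> p2; apply: main_gen.
rewrite -exprVn Binv.
have := UT_pow (1 + 2 ^ k) (UT_C K (p ^ s)).
subst p.
by rewrite -mulr_natr hm mulr1 (oppr_pchar2 hp).
Qed.
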